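(* Let $S$ be a locally compact Hausdorff space with Borel $\sigma$-algebra $\mathscr{S}$, let $\mathscr{S}_0$ be an algebra of subsets of $S$ generating $\mathscr{S}$, and let $X=(X_1,\ldots,X_n)$ be an exchangeable random element of $S^n$ with law $P$, such that: (a) for every $\epsilon>0$ there exist $V\in\mathscr{S}_0$ and a compact $K$ with $V\subset K$ and $\mathbb{P}(X_1\in V)\ge1-\epsilon$; (b) for every $\epsilon>0$ and $V\in\mathscr{S}_0$ there exist an open $O$ and $W\in\mathscr{S}_0$ with $V\subset O\subset W$ and $\mathbb{P}(X_1\in W\setminus V)\le\epsilon$. Suppose there is an increasing sequence $\mathscr{G}_1\subset\mathscr{G}_2\subset\cdots$ of $\sigma$-algebras on $S$ with $\bigcup_k\mathscr{G}_k=\mathscr{S}_0$, and for each $k$ a probability measure $P_k$ on $(S^n,\mathscr{G}_k^n)$ such that \[ \lim_{k\to\infty}\sup_{A\in\mathscr{G}_k^n}|P_k(A)-P(A)|=0, \] and suppose that for some $N>n$ every $P_k$ is $N$-extendible. Then $P$ is $N$-extendible.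
   Context: $\mathscr{G}_k^n$ denotes the product $\sigma$-algebra on $S^n$. A probability measure on $S^m$ (with a product $\sigma$-algebra) is exchangeable if it is invariant under all permutations of coordinates. For $N\ge n$, an exchangeable probability measure $P_n$ on $(S^n,\mathscr{G}^n)$ is $N$-extendible if there is an exchangeable probability measure $P_N$ on $(S^N,\mathscr{G}^N)$ with $P_n(A)=P_N(A\times S^{N-n})$ for all $A\in\mathscr{G}^n$ (here $\mathscr{G}$ is $\mathscr{G}_k$ for $P_k$ and $\mathscr{S}$ for $P$). *)

(* Defs.v *)
From HB Require Import structures.
From mathcomp Require Import all_boot all_order all_algebra all_fingroup.
From mathcomp Require Import all_classical all_reals all_analysis.
Set Implicit Arguments. Unset Strict Implicit. Unset Printing Implicit Defensive.
Import Order.TTheory GRing.Theory Num.Theory numFieldNormedType.Exports.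
Local Open Scope classical_set_scope.
Local Open Scope ring_scope.

Definition set_algebra (T : Type) (G : set (set T)) : Prop :=
  [/\ G setT, (forall A, G A -> G (~` A)) & (forall A B, G A -> G B -> G (A `|` B))].

Definition gen_sigma (T : Type) (G : set (set T)) : set (set T) :=
  smallest (sigma_algebra setT) G.

Definition borel_sets (S : topologicalType) : set (set S) := gen_sigma (@open S).
Arguments borel_sets : clear implicits.

(* S^m is modelled as 'I_m -> S; the product sigma-algebra G^m is generated
   by the measurable cylinders {x | x i \in A}, A \in G. *)
Definition prod_sigma (S : Type) (m : nat) (G : set (set S)) : set (set ('I_m -> S)) :=
  gen_sigma [set C | exists i : 'I_m, exists2 A, G A & C = (fun x => x i) @^-1` A].
Arguments prod_sigma {S} m G.

Definition is_probability (R : realType) (T : Type) (F : set (set T)) (mu : set T -> R) : Prop :=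
  [/\ mu setT = 1,
      (forall A, F A -> 0 <= mu A) &
      (forall B : nat -> set T, (forall i, F (B i)) -> trivIset setT B ->
         (fun m => \sum_(i < m) mu (B i)) @ \oo --> mu (\bigcup_i B i))].

Definition exchangeable (R : realType) (S : Type) (m : nat) (G : set (set S))
  (mu : set ('I_m -> S) -> R) : Prop :=
  forall (s : {perm 'I_m}) (A : set ('I_m -> S)), prod_sigma m G A ->
    mu A = mu ([set x : 'I_m -> S | A (fun i => x (s i))]).

(* A x S^(N-n), seen as a subset of S^N *)
Definition cyl_ext (S : Type) (n N : nat) (hnN : (n <= N)%N) (A : set ('I_n -> S))
  : set ('I_N -> S) :=
  [set y | A (fun i : 'I_n => y (widen_ord hnN i))].

Definition extendible (R : realType) (S : Type) (n N : nat) (hnN : (n <= N)%N)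
  (G : set (set S)) (P : set ('I_n -> S) -> R) : Prop :=
  is_probability (prod_sigma n G) P /\ exchangeable G P /\
  exists PN : set ('I_N -> S) -> R,
    [/\ is_probability (prod_sigma N G) PN, exchangeable G PN &
        forall A, prod_sigma n G A -> P A = PN (cyl_ext hnN A)].

(* Main.v *)
Require Import Defs.
From HB Require Import structures.
From mathcomp Require Import all_boot all_order all_algebra all_fingroup.
From mathcomp Require Import all_classical all_reals all_analysis.
From mathcomp Require Import ring lra.
Import Order.TTheory GRing.Theory Num.Theory numFieldNormedType.Exports.
Set Implicit Arguments. Unset Strict Implicit. Unset Printing Implicit Defensive.
Local Open Scope classical_set_scope.
Local Open Scope ring_scope.

Lemma in_bigI (T : Type) m (E : 'I_m -> set T) x :
  (\big[setI/setT]_(i < m) E i) x <-> (forall i, E i x).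
Proof.
elim: m E => [|m IH] E; first by rewrite big_ord0; split => // _ [].
rewrite big_ord_recr /=; split.
  move=> [/IH h1 h2] i; case: (unliftP ord_max i) => [j ->|->] //.
  have -> : lift ord_max j = widen_ord (leqnSn m) j by apply: val_inj; exact: lift_max.
  exact: h1.
by move=> h; split; [apply/IH => i; exact: h|exact: h].
Qed.

Lemma in_bigU (T : Type) m (E : 'I_m -> set T) x :
  (\big[setU/set0]_(i < m) E i) x <-> (exists i, E i x).
Proof.
elim: m E => [|m IH] E; first by rewrite big_ord0; split => // -[[]].
rewrite big_ord_recr /=; split.
  by move=> [/IH [i hi]|h]; [exists (widen_ord (leqnSn m) i)|exists ord_max].
move=> [i]; case: (unliftP ord_max i) => [j ->|->]; last by right.
have -> : lift ord_max j = widen_ord (leqnSn m) j by apply: val_inj; exact: lift_max.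
by move=> h; left; apply/IH; exists j.
Qed.

Section falg.
Variables (T : Type) (H : set (set T)).
Hypothesis aH : set_algebra H.

Lemma alg_T : H setT. Proof. by case: aH. Qed.
Lemma alg_C A : H A -> H (~` A). Proof. by case: aH => _ h _; exact: h. Qed.
Lemma alg_U A B : H A -> H B -> H (A `|` B). Proof. by case: aH => _ _ h; exact: h. Qed.
Lemma alg_0 : H set0. Proof. by rewrite -setCT; apply: alg_C; exact: alg_T. Qed.
Lemma alg_I A B : H A -> H B -> H (A `&` B).
Proof. by move=> hA hB; rewrite -[A `&` B]setCK setCI; apply/alg_C/alg_U; apply: alg_C. Qed.
Lemma alg_D A B : H A -> H B -> H (A `\` B).
Proof. by move=> hA hB; rewrite setDE; apply: alg_I => //; exact: alg_C. Qed.
Lemma alg_bigU m (E : 'I_m -> set T) : (forall i, H (E i)) -> H (\big[setU/set0]_(i < m) E i).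
Proof. by move=> hE; elim/big_ind: _ => //; [exact: alg_0|exact: alg_U]. Qed.
Lemma alg_bigI m (E : 'I_m -> set T) : (forall i, H (E i)) -> H (\big[setI/setT]_(i < m) E i).
Proof. by move=> hE; elim/big_ind: _ => //; [exact: alg_T|exact: alg_I]. Qed.
End falg.

Lemma sigma_alg (T : Type) (F : set (set T)) : sigma_algebra setT F -> set_algebra F.
Proof.
case=> F0 FD FU; split.
- by rewrite -(setD0 setT); apply: FD.
- by move=> A hA; rewrite -setTD; apply: FD.
- by move=> A B hA hB; rewrite -bigcup2E; apply: FU; case=> [|[|i]] //=.
Qed.

Lemma gen_sigma_alg (T : Type) (G : set (set T)) : set_algebra (gen_sigma G).
Proof. exact/sigma_alg/smallest_sigma_algebra. Qed.

Definition fprob (R : realType) (T : Type) (H : set (set T)) (mu : set T -> R) :=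
  [/\ mu setT = 1, (forall A, H A -> 0 <= mu A) &
      (forall A B, H A -> H B -> A `&` B = set0 -> mu (A `|` B) = mu A + mu B)].

Section fprob.
Variables (R : realType) (T : Type) (H : set (set T)) (mu : set T -> R).
Hypothesis aH : set_algebra H.
Hypothesis pmu : fprob H mu.

Lemma fp_T : mu setT = 1. Proof. by case: pmu. Qed.
Lemma fp_ge0 A : H A -> 0 <= mu A. Proof. by case: pmu => _ h _; exact: h. Qed.
Lemma fp_add A B : H A -> H B -> A `&` B = set0 -> mu (A `|` B) = mu A + mu B.
Proof. by case: pmu => _ _ h; exact: h. Qed.
Lemma fp_0 : mu set0 = 0.
Proof.
have := @fp_add set0 set0 (alg_0 aH) (alg_0 aH) (set0I _).
rewrite setU0 => h; have := congr1 (fun x => x - mu set0) h.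
by rewrite addrK subrr.
Qed.
Lemma fp_D A B : H A -> H B -> B `<=` A -> mu A = mu B + mu (A `\` B).
Proof.
move=> hA hB BA; rewrite -(fp_add hB (alg_D aH hA hB)); first by rewrite setDUK.
by rewrite setDE setICA setICr setI0.
Qed.
Lemma fp_le A B : H A -> H B -> B `<=` A -> mu B <= mu A.
Proof.
move=> hA hB BA; rewrite (fp_D hA hB BA) lerDl; apply: fp_ge0; exact: alg_D.
Qed.
Lemma fp_le1 A : H A -> mu A <= 1.
Proof. by move=> hA; rewrite -fp_T; apply: fp_le => //; exact: alg_T. Qed.
Lemma fp_C A : H A -> mu (~` A) = 1 - mu A.
Proof.
move=> hA; rewrite -fp_T (fp_D (alg_T aH) hA) //; first by rewrite setTD addrAC subrr add0r.
Qed.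
Lemma fp_U A B : H A -> H B -> mu (A `|` B) <= mu A + mu B.
Proof.
move=> hA hB.
have hD : H ((A `|` B) `\` A) by apply: alg_D => //; exact: alg_U.
have e : A `|` B = A `|` ((A `|` B) `\` A) by rewrite setUC setDUK.
have d : A `&` ((A `|` B) `\` A) = set0 by rewrite setDE setICA setICr setI0.
rewrite e (fp_add hA hD d) lerD2l; apply: fp_le => //.
by move=> x [[//|]].
Qed.
Lemma fp_bigU m (E : 'I_m -> set T) : (forall i, H (E i)) ->
  mu (\big[setU/set0]_(i < m) E i) <= \sum_(i < m) mu (E i).
Proof.
move=> hE; elim: m E hE => [|m IH] E hE.
  by rewrite !big_ord0 fp_0.
rewrite !big_ord_recr /=; apply: le_trans (fp_U _ _) _.
- exact: alg_bigU.
- exact: hE.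
by rewrite lerD2r; apply: IH.
Qed.
Lemma fp_bigU_eq m (E : 'I_m -> set T) : (forall i, H (E i)) ->
  (forall i j, i != j -> E i `&` E j = set0) ->
  mu (\big[setU/set0]_(i < m) E i) = \sum_(i < m) mu (E i).
Proof.
elim: m E => [|m IH] E hE dE; first by rewrite !big_ord0 fp_0.
rewrite !big_ord_recr /= fp_add; first last.
- apply/seteqP; split => x // [/in_bigU [i hi] he].
  have := dE (widen_ord (leqnSn m) i) ord_max.
  have ne : widen_ord (leqnSn m) i != ord_max by rewrite neq_ltn /= ltn_ord.
  by move=> /(_ ne) e; rewrite -e; split.
- exact: hE.
- exact: alg_bigU.
rewrite IH // => i j ij; apply: dE.
by apply: contra ij => /eqP [] e; apply/eqP/val_inj.
Qed.
End fprob.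
Lemma geo (R : realType) (e : R) k : \sum_(i < k) e / 2 ^+ i.+2 = e / 2 - e / 2 ^+ k.+1.
Proof.
elim: k => [|k IH]; first by rewrite big_ord0 expr1 subrr.
rewrite big_ord_recr /= IH.
have h : (2 : R) ^+ k != 0 by rewrite expf_neq0.
rewrite !exprS; field; rewrite h //.
Qed.
Lemma lim_near (R : realType) (u : nat -> R) a b :
  u @ \oo --> a -> (\forall m \near \oo, u m = b) -> a = b.
Proof.
move=> h hb; have hb' : u @ \oo --> b by apply: cvg_near_cst.
exact: (@cvg_unique R (@norm_hausdorff R R^o) _ _ _ _ h hb').
Qed.

Section prob.
Variables (R : realType) (T : Type) (F : set (set T)) (mu : set T -> R).
Hypothesis sF : sigma_algebra setT F.
Hypothesis pmu : is_probability F mu.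

Lemma prob0 : mu set0 = 0.
Proof.
case: pmu => _ _ hs.
have F0 : F set0 by case: sF.
have := hs (fun _ => set0) (fun _ => F0).
have tr : trivIset setT (fun _ : nat => @set0 T) by move=> i j _ _; rewrite set0I => -[].
move=> /(_ tr); rewrite bigcup0 // => h.
have e : (fun m => \sum_(i < m) mu set0) = (fun m => mu set0 *+ m).
  by apply: funext => m; rewrite sumr_const card_ord.
rewrite e in h.
have h1 : (fun m => mu set0 *+ m.+1) @ \oo --> mu set0 by rewrite (cvg_shiftS (fun m => mu set0 *+ m)).
have h2 : (fun m => mu set0 *+ m.+1 - mu set0 *+ m) @ \oo --> mu set0 - mu set0.
  exact: (cvgB h1 h).
rewrite subrr in h2.
have e2 : (fun m => mu set0 *+ m.+1 - mu set0 *+ m) = (fun=> mu set0).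
  by apply: funext => m; rewrite mulrS addrK.
rewrite e2 in h2.
apply/esym; apply: (lim_near h2); exact: nearW.
Qed.

Lemma prob_fprob : fprob F mu.
Proof.
case: pmu => h1 h2 hs; split => // A B hA hB hAB.
have tr : trivIset setT (bigcup2 A B) by rewrite -trivIset_bigcup2.
have hF : forall i, F (bigcup2 A B i).
  case=> [|[|i]] //=; by case: sF.
have := hs _ hF tr; rewrite bigcup2E => h.
apply: (lim_near h); near=> m.
have m2 : (2 <= m)%N by near: m; exists 2%N.
rewrite -(subnKC m2) big_split_ord /= 2!big_ord_recr /= big_ord0 add0r.
rewrite big1 ?addr0 // => i _; exact: prob0.
Unshelve. all: by end_near.
Qed.
End prob.

Lemma fprob_prob (R : realType) (T : Type) (F : set (set T)) (mu : set T -> R) :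
  mu setT = 1 -> (forall A, F A -> 0 <= mu A) ->
  (forall B : nat -> set T, (forall i, F (B i)) -> trivIset setT B ->
         (fun m => \sum_(i < m) mu (B i)) @ \oo --> mu (\bigcup_i B i)) ->
  is_probability F mu.
Proof. by move=> *; split. Qed.

Lemma prob_unique (R : realType) (T : Type) (C : set (set T)) (mu1 mu2 : set T -> R) :
  setI_closed C -> C setT ->
  is_probability (gen_sigma C) mu1 -> is_probability (gen_sigma C) mu2 ->
  (forall A, C A -> mu1 A = mu2 A) ->
  forall A, gen_sigma C A -> mu1 A = mu2 A.
Proof.
move=> CI CT p1 p2 e.
have sF : sigma_algebra setT (gen_sigma C) by exact: smallest_sigma_algebra.
have f1 := prob_fprob sF p1; have f2 := prob_fprob sF p2.
have aF := sigma_alg sF.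
pose D := [set A | gen_sigma C A /\ mu1 A = mu2 A].
have dD : dynkin D.
  split.
  - by split; [exact: (alg_T aF)|rewrite (fp_T f1) (fp_T f2)].
  - move=> A [hA eA]; split; first exact: (alg_C aF).
    by rewrite (fp_C aF f1 hA) (fp_C aF f2 hA) eA.
  - move=> B tB hB; split; first by case: sF => _ _; apply => i; case: (hB i).
    case: p1 => _ _ /(_ B (fun i => (hB i).1) tB) c1.
    case: p2 => _ _ /(_ B (fun i => (hB i).1) tB) c2.
    have ee : (fun m => \sum_(i < m) mu2 (B i)) = (fun m => \sum_(i < m) mu1 (B i)).
      by apply: funext => m; apply: eq_bigr => i _; case: (hB i) => _ ->.
    rewrite ee in c2.
    exact: (@cvg_unique R (@norm_hausdorff R R^o) _ _ _ _ c1 c2).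
have CD : C `<=` D by move=> A hA; split; [exact: sub_sigma_algebra|exact: e].
have := smallest_sub dD CD.
by rewrite setI_closed_g_dynkin_g_sigma_algebra // => h A /h [].
Qed.

Definition rect (S : Type) (m : nat) (G0 : set (set S)) : set (set ('I_m -> S)) :=
  [set A | exists B : 'I_m -> set S, (forall i, G0 (B i)) /\ A = [set x | forall i, B i (x i)]].
Arguments rect {S} m G0.

Lemma preimage_gen (X Y : Type) (f : X -> Y) (CX : set (set X)) (CY : set (set Y)) :
  (forall B, CY B -> gen_sigma CX (f @^-1` B)) ->
  forall B, gen_sigma CY B -> gen_sigma CX (f @^-1` B).
Proof.
move=> h; apply: smallest_sub => //; split.
- by rewrite preimage_set0; exact: sigma_algebra0.
- by move=> A hA; rewrite setTD -preimage_setC -setTD; exact: sigma_algebraCD.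
- by move=> A hA; rewrite preimage_bigcup; exact: sigma_algebra_bigcup.
Qed.

Lemma gen_sigma_sub (T : Type) (C1 C2 : set (set T)) : C1 `<=` C2 -> gen_sigma C1 `<=` gen_sigma C2.
Proof. exact: sub_sigma_algebra2. Qed.

Lemma gen_sigma_min (T : Type) (C1 C2 : set (set T)) : C1 `<=` gen_sigma C2 -> gen_sigma C1 `<=` gen_sigma C2.
Proof. by move=> h; apply: smallest_sub => //; exact: smallest_sigma_algebra. Qed.

Lemma rect_prod (S : Type) m (G0 F : set (set S)) : G0 `<=` F -> rect m G0 `<=` prod_sigma m F.
Proof.
move=> GF A [B [hB ->]].
have -> : [set x | forall i, B i (x i)] = \big[setI/setT]_(i < m) ((fun x => x i) @^-1` B i).
  by apply/seteqP; split => x; rewrite /= in_bigI.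
apply: alg_bigI; first exact: gen_sigma_alg.
move=> i; apply: sub_sigma_algebra; exists i; exists (B i) => //; exact: GF.
Qed.

Lemma coord_rect (S : Type) m (G0 : set (set S)) (i : 'I_m) E :
  G0 setT -> G0 E -> rect m G0 ((fun x : 'I_m -> S => x i) @^-1` E).
Proof.
move=> hT hE; exists (fun j => if j == i then E else setT); split.
  by move=> j; case: eqP.
apply/seteqP; split => x /=.
  by move=> h j; case: eqP => [->|].
by move=> /(_ i); rewrite eqxx.
Qed.

Lemma prod_sigma_rect (S : Type) m (S0 : set (set S)) : S0 setT ->
  prod_sigma m (gen_sigma S0) = gen_sigma (rect m S0).
Proof.
move=> hT; apply/seteqP; split.
  apply: gen_sigma_min => A [i [E hE ->]].
  apply: (preimage_gen (f := fun x : 'I_m -> S => x i) (CY := S0)) => // B hB.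
  by apply: sub_sigma_algebra; apply: coord_rect.
apply: gen_sigma_min; apply: rect_prod; exact: sub_sigma_algebra.
Qed.

Lemma prod_sigma_mono (S : Type) m (F1 F2 : set (set S)) : F1 `<=` F2 ->
  prod_sigma m F1 `<=` prod_sigma m F2.
Proof.
move=> h; apply: gen_sigma_sub => A [i [E hE ->]]; exists i; exists E => //; exact: h.
Qed.

Lemma rectI (S : Type) m (G0 : set (set S)) : set_algebra G0 -> setI_closed (rect m G0).
Proof.
move=> aG A B [BA [hA ->]] [BB [hB ->]]; exists (fun i => BA i `&` BB i); split.
  by move=> i; apply: alg_I.
by apply/seteqP; split => x /=; [move=> [h1 h2] i; split|move=> h; split => i; case: (h i)].
Qed.

Lemma rectT (S : Type) m (G0 : set (set S)) : set_algebra G0 -> rect m G0 setT.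
Proof.
move=> aG; exists (fun=> setT); split => //; first by move=> _; exact: alg_T.
by apply/seteqP; split.
Qed.

Lemma prod_sigma_comp (S : Type) m m' (F : set (set S)) (g : 'I_m -> 'I_m') A :
  prod_sigma m F A -> prod_sigma m' F [set y : 'I_m' -> S | A (fun i => y (g i))].
Proof.
move=> hA; apply: (preimage_gen (f := fun y : 'I_m' -> S => (fun i => y (g i)))
   (CY := [set C | exists i : 'I_m, exists2 E, F E & C = (fun x => x i) @^-1` E])) => //.
move=> B [i [E hE ->]]; apply: sub_sigma_algebra; exists (g i); exists E => //.
Qed.
Section rect_semiring.
Variables (S : Type) (m : nat) (S0 : set (set S)).
Hypothesis aS : set_algebra S0.

Lemma rect0 : (0 < m)%N -> rect m S0 set0.
Proof.
move=> m0; exists (fun=> set0); split; first by move=> _; exact: alg_0.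
by apply/seteqP; split => x //= /(_ (Ordinal m0)).
Qed.

Lemma rectD : semi_setD_closed (rect m S0).
Proof.
move=> A B [a [ha ->]] [b [hb ->]].
pose c (j : 'I_m) (i : 'I_m) := if (i < j)%N then a i `&` b i else if i == j then a i `\` b i else a i.
pose D j := [set x : 'I_m -> S | forall i, c j i (x i)].
exists [set D j | j in setT]; split.
- exact: finite_image finite_finset.
- move=> _ [j _ <-]; exists (c j); split => // i; rewrite /c.
  case: ltnP => _; first exact: alg_I.
  by case: eqP => _ //; exact: alg_D.
- apply/seteqP; split => x /=.
  + move=> [xa xb].
    have [j0 hj0] : exists j, ~ b j (x j).
      apply: contrapT => h; apply: xb => i; apply: contrapT => nb; apply: h; by exists i.
    pose P := fun j : 'I_m => ~~ `[< b j (x j) >].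
    have Pj0 : P j0 by apply/negP => /asboolP.
    case: (arg_minnP (fun j : 'I_m => nat_of_ord j) Pj0) => j Pj jmin.
    exists (D j); first by exists j.
    move=> i; rewrite /c; case: ltnP => ij.
      split; first exact: xa.
      apply: contrapT => nb.
      have : P i by apply/negP => /asboolP.
      by move/jmin; rewrite leqNgt ij.
    case: eqP => [->|_]; last exact: xa.
    by split; [exact: xa|move: Pj => /negP; apply: contra_not => h; exact/asboolP].
  + move=> [_ [j _ <-]] hx; split.
      move=> i; move: (hx i); rewrite /c.
      by case: ltnP => _; [case|case: eqP => _ //; case].
    move=> hb'; move: (hx j); rewrite /c ltnn eqxx => -[_]; exact.
- move=> _ _ [j _ <-] [j' _ <-] [x [h1 h2]].
  suff -> : j = j' by [].
  apply: contrapT => jj.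
  have : (j < j')%N \/ (j' < j)%N.
    by case: (ltngtP j j') => [|| /val_inj e]; [left|right|].
  case=> lt.
  + move: (h2 j) (h1 j); rewrite /c lt ltnn eqxx => -[_ hb1] [_]; exact.
  + move: (h1 j') (h2 j'); rewrite /c lt ltnn eqxx => -[_ hb1] [_]; exact.
Qed.
End rect_semiring.
Record srf (T : Type) := SRF {
  srf_point : T; srf_set : set (set T); srf0 : srf_set set0;
  srfI : setI_closed srf_set; srfD : semi_setD_closed srf_set }.
Definition srtype (T : Type) (F : srf T) := T.
HB.instance Definition _ T (F : srf T) := gen_eqMixin (srtype F).
HB.instance Definition _ T (F : srf T) := gen_choiceMixin (srtype F).
HB.instance Definition _ T (F : srf T) := isPointed.Build (srtype F) (srf_point F).
HB.instance Definition _ T (F : srf T) :=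
  @isSemiRingOfSets.Build default_measure_display (srtype F) (srf_set F) (@srf0 _ F) (@srfI _ F) (@srfD _ F).

Record pmeas (R : realType) (T : Type) (F : srf T) := PM {
  pm_fun : set (srtype F) -> \bar R; pm0 : pm_fun set0 = 0%E;
  pmge0 : forall x, (0 <= pm_fun x)%E; pmsig : semi_sigma_additive pm_fun }.
HB.instance Definition _ R T F (M : @pmeas R T F) :=
  isMeasure.Build _ _ _ (pm_fun M) (@pm0 _ _ _ M) (@pmge0 _ _ _ M) (@pmsig _ _ _ M).

Section ext.
Variables (R : realType) (T : Type) (F : srf T) (M : pmeas R F).
Definition extm := measure_extension (pm_fun M).
Lemma extmE A : srf_set F A -> extm A = pm_fun M A.
Proof. move=> hA; exact: measurable_mu_extE. Qed.

Hypothesis hT : srf_set F setT.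
Hypothesis h1 : pm_fun M setT = 1%E.

Lemma extm_fin A : gen_sigma (srf_set F) A -> extm A \is a fin_num.
Proof.
move=> hA; rewrite ge0_fin_numE; last exact: measure_ge0.
apply: (@le_lt_trans _ _ (extm setT)).
  apply: le_measure; rewrite ?inE //; exact: measurableT.
by rewrite extmE // h1 ltry.
Qed.

Lemma ext_prob : is_probability (gen_sigma (srf_set F)) (fun A => fine (extm A)).
Proof.
split.
- by rewrite extmE // h1.
- move=> A _; apply: fine_ge0; exact: measure_ge0.
- move=> B hB tB.
  have hs := @measure_sigma_additive _ _ _ extm B hB tB.
  have hU : measurable (\bigcup_i B i : set (g_sigma_algebraType (@measurable _ (srtype F)))).
    exact: bigcupT_measurable.
  have hs' : (fun m => \sum_(0 <= i < m) extm (B i)) @ \oo --> (fine (extm (\bigcup_i B i)))%:E.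
    rewrite fineK; [exact: hs | exact: extm_fin].
  have e : (fun m => \sum_(i < m) fine (extm (B i))) = fine \o (fun m => \sum_(0 <= i < m) extm (B i)).
    apply: funext => m /=; rewrite -sum_fine ?big_mkord // => i _; exact: extm_fin.
  rewrite e; exact: fine_cvg hs'.
Qed.
End ext.
Section cluster.
Import ArrowAsProduct.
Variables (R : realType) (I : eqType) (f : nat -> (I -> R)).
Hypothesis fb : forall k i, 0 <= f k i <= 1.

Let K0 := [set y : I -> R | forall i, (`[0, 1]%classic : set R) (y i)].

Let cK0 : compact K0.
Proof. by apply: (@tychonoff I (fun _ => R) (fun _ => `[0, 1]%classic)) => _; exact: segment_compact. Qed.

Let FF := (fun k => f k) @ \oo.

Let exQ : exists Q, K0 Q /\ cluster FF Q.
Proof.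
have hF : FF K0 by exists 0%N => // k _ i; rewrite /= in_itv /=; exact: fb.
have := cK0 (fmap_proper_filter (fun k => f k) eventually_filter) hF.
by case=> Q [h1 h2]; exists Q.
Qed.

Let cl_cvg (Q : I -> R) (g : (I -> R) -> R) c : cluster FF Q -> continuous g ->
  (fun k => g (f k)) @ \oo --> c -> g Q = c.
Proof.
move=> hQ gc hc; apply: contrapT => ne.
have e0 : 0 < `|g Q - c| / 2 by rewrite divr_gt0 // normr_gt0 subr_eq0; apply/eqP.
pose e := PosNum e0.
have n1 : nbhs Q (g @^-1` ball (g Q) (`|g Q - c| / 2)).
  by apply: gc; exact: nbhsx_ballx.
have n2 : FF [set y | ball c (`|g Q - c| / 2) (g y)].
  by move/cvgrPdist_lt: hc => /(_ _ e0).
have [y [y1 y2]] := hQ _ _ n2 n1.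
move: y1 y2; rewrite /ball /= => y1 y2.
rewrite distrC in y1.
have := le_lt_trans (ler_distD (g y) (g Q) c) (ltrD y2 y1).
by rewrite -splitr ltxx.
Qed.

Lemma cluster_ex : exists Q : I -> R, (forall i, 0 <= Q i <= 1) /\
  (forall A c, (fun k => f k A) @ \oo --> c -> Q A = c) /\
  (forall A B C, (\forall k \near \oo, f k A = f k B + f k C) -> Q A = Q B + Q C) /\
  (forall A B, (\forall k \near \oo, f k A = f k B) -> Q A = Q B).
Proof.
have [Q [KQ cQ]] := exQ; exists Q; split.
  by move=> i; have := KQ i; rewrite /= in_itv.
have pc (A : I) : continuous (fun y : I -> R => y A) by exact: (@proj_continuous I (fun _ => R) A).
split; first by move=> A c hc; apply: (cl_cvg (g := fun y => y A)).
split.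
  move=> A B C hn; apply/eqP; rewrite -subr_eq0; apply/eqP.
  apply: (cl_cvg (g := fun y => y A - (y B + y C))) => //.
    move=> y; exact: (continuousB (pc A y) (continuousD (pc B y) (pc C y))).
  apply: cvg_near_cst; apply: filterS hn => k ->; exact: subrr.
move=> A B hn; apply/eqP; rewrite -subr_eq0; apply/eqP.
apply: (cl_cvg (g := fun y => y A - y B)) => //.
  move=> y; exact: (continuousB (pc A y) (pc B y)).
apply: cvg_near_cst; apply: filterS hn => k ->; exact: subrr.
Qed.
End cluster.
Section cover.
Import ArrowAsProduct.
Variables (S : topologicalType) (m : nat).

Let open_prod (O : 'I_m -> set S) : (forall j, open (O j)) ->
  open [set x : 'I_m -> S | forall j, O j (x j)].
Proof.
move=> hO.
have -> : [set x : 'I_m -> S | forall j, O j (x j)] = \big[setI/setT]_(j < m) ((fun x : 'I_m -> S => x j) @^-1` O j).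
  by apply/seteqP; split => x; rewrite /= in_bigI.
elim/big_ind: _; [exact: openT|by move=> A B; apply: openI|].
move=> j _; apply: open_comp (hO j) => x _.
exact: (@proj_continuous _ (fun _ => S) j).
Qed.

Let cover_fin (C : set ('I_m -> S)) (U : nat -> set ('I_m -> S)) :
  compact C -> (forall i, open (U i)) -> C `<=` \bigcup_i U i ->
  exists k, C `<=` \big[setU/set0]_(i < k) U i.
Proof.
move=> cC oU CU; apply: contrapT => nex.
pose B k := C `\` \big[setU/set0]_(i < k) U i.
have Bn k : B k !=set0.
  apply: contrapT => h; apply: nex; exists k => x Cx; apply: contrapT => nU.
  by apply: h; exists x.
have fF : Filter (filter_from setT B).
  apply: filter_from_filter; first by exists 0%N.
  move=> i j _ _; exists (maxn i j) => // x [Cx nx].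
  have sub l : (l <= maxn i j)%N -> ~ (\big[setU/set0]_(i0 < l) U i0) x.
    move=> hl hx; apply: nx; move: hx; rewrite -!bigcup_mkord => -[l' /= hl' Ul'].
    by exists l' => //=; exact: leq_trans hl' hl.
  by split; split => //; apply: sub; [exact: leq_maxl|exact: leq_maxr].
have pF : ProperFilter (filter_from setT B) by apply: filter_from_proper => // i _; exact: Bn.
have FC : filter_from setT B C by exists 0%N => // x [].
have [x [Cx clx]] := cC _ pF FC.
have [j _ Ujx] := CU _ Cx.
have nU : nbhs x (U j) by apply: open_nbhs_nbhs; split.
have [y [[_ ny] Uy]] := clx _ _ (ex_intro2 _ _ j.+1 I (@subset_refl _ (B j.+1))) nU.
apply: ny; rewrite -bigcup_mkord; exists j => //=.
Qed.

Lemma prod_cover (C : 'I_m -> set S) (O : nat -> 'I_m -> set S) :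
  (forall j, compact (C j)) -> (forall i j, open (O i j)) ->
  [set x | forall j, C j (x j)] `<=` \bigcup_i [set x | forall j, O i j (x j)] ->
  exists k, [set x | forall j, C j (x j)] `<=` \big[setU/set0]_(i < k) [set x | forall j, O i j (x j)].
Proof.
move=> cC oO h; apply: (cover_fin (U := fun i => [set x | forall j, O i j (x j)])) => //.
- exact: (@tychonoff _ (fun _ => S) C).
- by move=> i; apply: open_prod.
Qed.
End cover.

Lemma prob_preimage (X Y : Type) (FX : set (set X)) (FY : set (set Y)) (h : X -> Y)
  (R : realType) (mu : set X -> R) :
  is_probability FX mu -> (forall A, FY A -> FX (h @^-1` A)) ->
  is_probability FY (fun A => mu (h @^-1` A)).
Proof.
case=> p1 p2 p3 hF; split.
- by rewrite preimage_setT.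
- by move=> A hA; apply: p2; exact: hF.
- move=> B hB tB; rewrite preimage_bigcup; apply: p3 => [i|]; first exact: hF.
  move=> i j _ _ [x [h1 h2]]; apply: tB => //; by exists (h x).
Qed.
Section main.
Variables (R : realType) (S : topologicalType) (S0 : set (set S)) (n N : nat)
  (hn : (0 < n)%N) (hnN : (n < N)%N) (P : set ('I_n -> S) -> R)
  (G : nat -> set (set S)) (Pk : nat -> set ('I_n -> S) -> R).
Hypotheses (aS0 : set_algebra S0) (hgen : gen_sigma S0 = borel_sets S)
  (pP : is_probability (prod_sigma n (borel_sets S)) P)
  (eP : exchangeable (borel_sets S) P)
  (ha : forall eps : R, 0 < eps -> exists V, exists K,
     [/\ S0 V, compact K, V `<=` K &
         1 - eps <= P [set x | V (x (Ordinal hn))]])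
  (hb : forall (eps : R) V, 0 < eps -> S0 V -> exists O, exists W,
     [/\ open O, S0 W, V `<=` O, O `<=` W &
         P [set x | (W `\` V) (x (Ordinal hn))] <= eps])
  (sG : forall k, sigma_algebra setT (G k))
  (mG : forall k, G k `<=` G k.+1)
  (uG : \bigcup_k G k = S0)
  (pPk : forall k, is_probability (prod_sigma n (G k)) (Pk k))
  (cvP : (fun k => sup [set `|Pk k A - P A| | A in prod_sigma n (G k)]) @ \oo --> (0 : R))
  (eG : forall k, extendible (ltnW hnN) (G k) (Pk k)).

Let hNn := ltnW hnN.
Let T := 'I_N -> S.
Let o0 := Ordinal hn.

Let GS0 k : G k `<=` S0. Proof. by move=> A hA; rewrite -uG; exists k. Qed.
Let S0B : S0 `<=` borel_sets S. Proof. by rewrite -hgen; exact: sub_sigma_algebra. Qed.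
Let GB k : G k `<=` borel_sets S. Proof. by move=> A /GS0 /S0B. Qed.
Let Gmono k k' : (k <= k')%N -> G k `<=` G k'.
Proof.
elim: k' => [|k' IH]; first by rewrite leqn0 => /eqP ->.
rewrite leq_eqVlt => /orP [/eqP ->//|]; rewrite ltnS => /IH h.
by move=> A hA; apply: mG; exact: h.
Qed.
Let S0fin m (B : 'I_m -> set S) : (forall i, S0 (B i)) -> exists k, forall i, G k (B i).
Proof.
move=> hB; have /choice [kk hkk] : forall i, exists k, G k (B i).
  by move=> i; have := hB i; rewrite -uG => -[k _ h]; exists k.
exists (\max_i kk i) => i; apply: Gmono (hkk i); exact: leq_bigmax.
Qed.
Let rect_k m A : rect m S0 A -> exists k, prod_sigma m (G k) A.
Proof.
move=> [B [hB e]]; have [k hk] := S0fin hB; exists k.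
by apply: (rect_prod (G0 := G k)) => //; exists B.
Qed.
Let sPS m k : sigma_algebra setT (prod_sigma m (G k)). Proof. exact: smallest_sigma_algebra. Qed.
Let aPS m k : set_algebra (prod_sigma m (G k)). Proof. exact: gen_sigma_alg. Qed.
Let PSmono m k k' : (k <= k')%N -> prod_sigma m (G k) `<=` prod_sigma m (G k').
Proof. by move=> kk; apply: prod_sigma_mono; exact: Gmono. Qed.
Let PSB m k : prod_sigma m (G k) `<=` prod_sigma m (borel_sets S).
Proof. by apply: prod_sigma_mono; exact: GB. Qed.
Let sPB m : sigma_algebra setT (prod_sigma m (borel_sets S)). Proof. exact: smallest_sigma_algebra. Qed.
Let aPB m : set_algebra (prod_sigma m (borel_sets S)). Proof. exact: gen_sigma_alg. Qed.
Let fP : fprob (prod_sigma n (borel_sets S)) P. Proof. exact: prob_fprob. Qed.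
Let fPk k : fprob (prod_sigma n (G k)) (Pk k). Proof. exact: prob_fprob. Qed.

Let Pk_cvg A k0 : prod_sigma n (G k0) A -> (fun k => Pk k A) @ \oo --> P A.
Proof.
move=> hA; apply/cvgrPdist_le => e e0.
move/cvgr0Pnorm_lt: cvP => /(_ e e0) hs.
near=> k.
have kk0 : (k0 <= k)%N by near: k; exists k0.
have hAk : prod_sigma n (G k) A by exact: PSmono kk0 _ hA.
have hle : `|Pk k A - P A| <= sup [set `|Pk k A - P A| | A in prod_sigma n (G k)].
  apply: ub_le_sup; last by exists A.
  exists 2 => _ [B hB <-].
  apply: le_trans (ler_normB _ _) _.
  rewrite (_ : 2 = 1 + 1) //; apply: lerD.
    by rewrite ger0_norm ?(fp_ge0 (fPk k)) ?(fp_le1 (aPS n k) (fPk k)).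
  have hB' := PSB hB.
  by rewrite ger0_norm ?(fp_ge0 fP) ?(fp_le1 (aPB n) fP).
rewrite distrC; apply: le_trans hle _.
have hk : `|sup [set `|Pk k A - P A| | A in prod_sigma n (G k)]| < e.
  by near: k; exact: hs.
exact: le_trans (ler_norm _) (ltW hk).
Unshelve. all: by end_near.
Qed.


Let exPN : forall k, exists PN : set T -> R,
  [/\ is_probability (prod_sigma N (G k)) PN, exchangeable (G k) PN &
      forall A, prod_sigma n (G k) A -> Pk k A = PN (cyl_ext hNn A)].
Proof. by move=> k; have [_ [_ h]] := eG k. Qed.

Let PNk : nat -> set T -> R := projT1 (choice exPN).
Let hPNk k := projT2 (choice exPN) k.
Let pPN k : is_probability (prod_sigma N (G k)) (PNk k). Proof. by case: (hPNk k). Qed.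
Let ePN k : exchangeable (G k) (PNk k). Proof. by case: (hPNk k). Qed.
Let cPN k A : prod_sigma n (G k) A -> Pk k A = PNk k (cyl_ext hNn A). Proof. by case: (hPNk k) => _ _; apply. Qed.
Let fPN k : fprob (prod_sigma N (G k)) (PNk k). Proof. exact: prob_fprob. Qed.

Let f k (A : set T) : R := if `[< prod_sigma N (G k) A >] then PNk k A else 0.
Let fE k A : prod_sigma N (G k) A -> f k A = PNk k A.
Proof. by move=> h; rewrite /f; case: asboolP. Qed.
Let fb k A : 0 <= f k A <= 1.
Proof.
rewrite /f; case: asboolP => h; last by rewrite lexx ler01.
by rewrite (fp_ge0 (fPN k)) ?(fp_le1 (aPS N k) (fPN k)).
Qed.

Let exQ := cluster_ex fb.
Let Q : set T -> R := projT1 (cid exQ).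
Let hQ := projT2 (cid exQ).
Let QB A : 0 <= Q A <= 1. Proof. by case: hQ. Qed.
Let Qlim A c : (fun k => f k A) @ \oo --> c -> Q A = c. Proof. by case: hQ => _ [h _]; exact: h. Qed.
Let Qadd A B C : (\forall k \near \oo, f k A = f k B + f k C) -> Q A = Q B + Q C.
Proof. by case: hQ => _ [_ [h _]]; exact: h. Qed.
Let Qeq A B : (\forall k \near \oo, f k A = f k B) -> Q A = Q B.
Proof. by case: hQ => _ [_ [_ h]]; exact: h. Qed.

Let U : set (set T) := [set A | exists k, prod_sigma N (G k) A].
Let Uev A : U A -> \forall k \near \oo, prod_sigma N (G k) A.
Proof. by move=> [k0 h]; exists k0 => // k /= kk; exact: PSmono kk _ h. Qed.
Let aU : set_algebra U.
Proof.
split.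
- by exists 0%N; exact: (alg_T (aPS N 0)).
- by move=> A [k h]; exists k; exact: (alg_C (aPS N k)).
- move=> A B [k1 h1] [k2 h2]; exists (maxn k1 k2); apply: (alg_U (aPS N _)).
    by apply: PSmono h1; exact: leq_maxl.
  by apply: PSmono h2; exact: leq_maxr.
Qed.
Let rectU A : rect N S0 A -> U A. Proof. by move=> /rect_k. Qed.

Let fQ : fprob U Q.
Proof.
split.
- apply: Qlim; apply: cvg_near_cst; apply: nearW => k.
  by rewrite fE; [exact: (fp_T (fPN k))|exact: (alg_T (aPS N k))].
- by move=> A _; case/andP: (QB A).
- move=> A B hA hB AB; apply: Qadd.
  near=> k.
  have hAk : prod_sigma N (G k) A by near: k; exact: Uev.
  have hBk : prod_sigma N (G k) B by near: k; exact: Uev.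
  rewrite !fE //; last exact: (alg_U (aPS N k)).
  exact: (fp_add (fPN k)).
Unshelve. all: by end_near.
Qed.

Let Qexch A (s : {perm 'I_N}) : U A -> Q A = Q [set x | A (fun i => x (s i))].
Proof.
move=> hA; apply: Qeq; near=> k.
have hAk : prod_sigma N (G k) A by near: k; exact: Uev.
rewrite !fE //; last exact: prod_sigma_comp.
exact: ePN.
Unshelve. all: by end_near.
Qed.

Let Qcyl A k0 : prod_sigma n (G k0) A -> Q (cyl_ext hNn A) = P A.
Proof.
move=> hA; apply: Qlim.
apply: cvg_trans (Pk_cvg hA); apply: near_eq_cvg; near=> k.
have hAk : prod_sigma n (G k) A by near: k; exists k0 => // k' /= kk; exact: PSmono kk _ hA.
rewrite fE; last exact: prod_sigma_comp.
by rewrite cPN.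
Unshelve. all: by end_near.
Qed.

Let PE (E : set S) := P [set x | E (x o0)].

Let Qmarg E (j : 'I_N) : S0 E -> Q [set x | E (x j)] = PE E.
Proof.
move=> hE.
pose j0 := widen_ord hNn o0.
have [k0 hk0] : exists k, G k E by move: hE; rewrite -uG => -[k _ h]; exists k.
have h0 : prod_sigma n (G k0) [set x : 'I_n -> S | E (x o0)].
  by apply: sub_sigma_algebra; exists o0; exists E.
rewrite (Qexch (tperm j j0)); last first.
  by exists k0; apply: sub_sigma_algebra; exists j; exists E.
rewrite /= tpermL.
exact: (Qcyl h0).
Qed.

Let rectP (B : 'I_N -> set S) : (forall j, S0 (B j)) -> rect N S0 [set x | forall j, B j (x j)].
Proof. by move=> hB; exists B. Qed.
Let coordU E (j : 'I_N) : S0 E -> U [set x : T | E (x j)].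
Proof. by move=> hE; apply: rectU; apply: coord_rect => //; exact: (alg_T aS0). Qed.

Let CU (B' B : 'I_N -> set S) : (forall j, S0 (B' j)) -> (forall j, S0 (B j)) ->
  (forall j, B j `<=` B' j) ->
  Q [set x | forall j, B' j (x j)] <= Q [set x | forall j, B j (x j)] + \sum_(j < N) PE (B' j `\` B j).
Proof.
move=> hB' hB BB.
have hX := rectU (rectP hB'); have hY := rectU (rectP hB).
have YX : [set x : T | forall j, B j (x j)] `<=` [set x | forall j, B' j (x j)].
  by move=> x h j; apply: BB; exact: h.
rewrite (fp_D aU fQ hX hY YX) lerD2l.
have hD : forall j, S0 (B' j `\` B j) by move=> j; apply: (alg_D aS0).
have hsub : [set x | forall j, B' j (x j)] `\` [set x | forall j, B j (x j)] `<=`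
    \big[setU/set0]_(j < N) [set x : T | (B' j `\` B j) (x j)].
  move=> x [hx nx]; apply/in_bigU.
  have [j hj] : exists j, ~ B j (x j).
    by apply: contrapT => h; apply: nx => j; apply: contrapT => h'; apply: h; exists j.
  by exists j; split; [exact: hx|].
apply: le_trans (fp_le aU fQ _ _ hsub) _.
- by apply: (alg_bigU aU) => j; exact: coordU.
- exact: (alg_D aU).
apply: le_trans (fp_bigU aU fQ _) _; first by move=> j; exact: coordU.
by apply: ler_sum => j _; rewrite Qmarg.
Qed.

Let PE_ge0 E : S0 E -> 0 <= PE E.
Proof. by move=> hE; apply: (fp_ge0 fP); apply: sub_sigma_algebra; exists o0; exists E => //; exact: S0B. Qed.

Let PEm E : S0 E -> prod_sigma n (borel_sets S) [set x : 'I_n -> S | E (x o0)].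
Proof. by move=> hE; apply: sub_sigma_algebra; exists o0; exists E => //; exact: S0B. Qed.

Let IC (B : set S) (d : R) : S0 B -> 0 < d -> exists D, exists C,
  [/\ S0 D, compact C, D `<=` C, C `<=` B & PE (B `\` D) <= d].
Proof.
move=> hB d0.
have d2 : 0 < d / 2 by rewrite divr_gt0.
have [Op [W [oO hW sO sW hPW]]] := hb d2 (alg_C aS0 hB).
have [V [K [hV cK VK hPV]]] := ha d2.
exists (~` W `&` V); exists (K `&` ~` Op); split.
- by apply: (alg_I aS0) => //; exact: (alg_C aS0).
- by apply: compact_closedI => //; exact: open_closedC.
- by move=> x [nW Vx]; split; [exact: VK|move=> Ox; apply: nW; exact: sW].
- by move=> x [_ nO]; apply: contrapT => nB; apply: nO; exact: sO.
have hD : S0 (~` W `&` V) by apply: (alg_I aS0) => //; exact: (alg_C aS0).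
have hsub : [set x : 'I_n -> S | (B `\` (~` W `&` V)) (x o0)] `<=`
    [set x | (W `\` ~` B) (x o0)] `|` ~` [set x | V (x o0)].
  move=> x [Bx nx]; case: (pselect (V (x o0))) => Vx; last by right.
  left; split; last by move=> /(_ Bx).
  by apply: contrapT => nW; apply: nx.
apply: le_trans (fp_le (aPB n) fP _ _ hsub) _.
- apply: (alg_U (aPB n)); first apply: PEm; first by apply: (alg_D aS0) => //; exact: (alg_C aS0).
  by apply: (alg_C (aPB n)); exact: PEm.
- by apply: PEm; exact: (alg_D aS0).
apply: le_trans (fp_U (aPB n) fP _ _) _.
- by apply: PEm; apply: (alg_D aS0) => //; exact: (alg_C aS0).
- by apply: (alg_C (aPB n)); exact: PEm.
rewrite (fp_C (aPB n) fP (PEm hV)) (splitr d); apply: lerD => //.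
by rewrite lerBlDl -lerBlDr.
Qed.

Let N0 : (0 < N)%N. Proof. exact: leq_trans hn hNn. Qed.

Let sum_const_d (d : R) : \sum_(j < N) (d / N%:R) = d.
Proof. by rewrite sumr_const card_ord -[X in X = d]mulr_natr divfK // pnatr_eq0 -lt0n. Qed.

Let IA (B : 'I_N -> set S) (d : R) : (forall j, S0 (B j)) -> 0 < d ->
  exists D : 'I_N -> set S, exists C : 'I_N -> set S,
  [/\ forall j, S0 (D j), forall j, compact (C j),
      forall j, D j `<=` C j, forall j, C j `<=` B j &
      Q [set x | forall j, B j (x j)] <= Q [set x | forall j, D j (x j)] + d].
Proof.
move=> hB d0.
have d' : 0 < d / N%:R by rewrite divr_gt0 // ltr0n.
have /choice [DC hDC] : forall j, exists DC : set S * set S,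
    [/\ S0 DC.1, compact DC.2, DC.1 `<=` DC.2, DC.2 `<=` B j & PE (B j `\` DC.1) <= d / N%:R].
  by move=> j; have [D [C h]] := IC (hB j) d'; exists (D, C).
exists (fun j => (DC j).1); exists (fun j => (DC j).2); split.
- by move=> j; case: (hDC j).
- by move=> j; case: (hDC j).
- by move=> j; case: (hDC j).
- by move=> j; case: (hDC j).
apply: le_trans (CU (B := fun j => (DC j).1) hB _ _) _.
- by move=> j; case: (hDC j).
- by move=> j; case: (hDC j) => _ _ h1 h2 _ x hx; exact: (h2 x (h1 x hx)).
rewrite lerD2l -(sum_const_d d); apply: ler_sum => j _; by case: (hDC j).
Qed.

Let OA (B : 'I_N -> set S) (d : R) : (forall j, S0 (B j)) -> 0 < d ->
  exists Op : 'I_N -> set S, exists W : 'I_N -> set S,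
  [/\ forall j, open (Op j), forall j, S0 (W j),
      forall j, B j `<=` Op j, forall j, Op j `<=` W j &
      Q [set x | forall j, W j (x j)] <= Q [set x | forall j, B j (x j)] + d].
Proof.
move=> hB d0.
have d' : 0 < d / N%:R by rewrite divr_gt0 // ltr0n.
have /choice [OW hOW] : forall j, exists OW : set S * set S,
    [/\ open OW.1, S0 OW.2, B j `<=` OW.1, OW.1 `<=` OW.2 & PE (OW.2 `\` B j) <= d / N%:R].
  by move=> j; have [Op [W h]] := hb d' (hB j); exists (Op, W).
exists (fun j => (OW j).1); exists (fun j => (OW j).2); split.
- by move=> j; case: (hOW j).
- by move=> j; case: (hOW j).
- by move=> j; case: (hOW j).
- by move=> j; case: (hOW j).
apply: le_trans (CU (B' := fun j => (OW j).2) _ hB _) _.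
- by move=> j; case: (hOW j).
- by move=> j; case: (hOW j) => _ _ h1 h2 _ x hx; exact: (h2 x (h1 x hx)).
rewrite lerD2l -(sum_const_d d); apply: ler_sum => j _; by case: (hOW j).
Qed.

Let Qsig (F : nat -> set T) : (forall i, rect N S0 (F i)) -> trivIset setT F ->
  rect N S0 (\bigcup_i F i) ->
  (fun m => \sum_(i < m) Q (F i)) @ \oo --> Q (\bigcup_i F i).
Proof.
move=> hF tF hA.
have UF i : U (F i) by apply: rectU.
have UA : U (\bigcup_i F i) by apply: rectU.
have dF i j : i != j -> F i `&` F j = set0.
  move=> ij; apply/seteqP; split => x // [h1 h2].
  by move/eqP: ij; apply; apply: (tF i j I I); exists x.
have UbU m : U (\big[setU/set0]_(i < m) F i) by apply: (alg_bigU aU) => i; exact: UF.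
have sE m : \sum_(i < m) Q (F i) = Q (\big[setU/set0]_(i < m) F i).
  rewrite (fp_bigU_eq aU fQ (E := fun i : 'I_m => F i)) // => i j ij.
  by apply: dF; apply: contra ij => /eqP e; apply/eqP/val_inj.
have smono m k : (m <= k)%N -> \sum_(i < m) Q (F i) <= \sum_(i < k) Q (F i).
  move=> mk; rewrite !sE; apply: (fp_le aU fQ) => // x /in_bigU [i hi].
  by apply/in_bigU; exists (widen_ord mk i).
have sle m : \sum_(i < m) Q (F i) <= Q (\bigcup_i F i).
  rewrite sE; apply: (fp_le aU fQ) => // x /in_bigU [i hi]; by exists i.
have key : forall e, 0 < e -> exists m, Q (\bigcup_i F i) <= \sum_(i < m) Q (F i) + e.
  move=> e e0.
  have e2 : 0 < e / 2 by rewrite divr_gt0.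
  case: hA => BA [hBA eA].
  have [D [C [hD cC DC CB hQD]]] := IA hBA e2.
  have /choice [BF hBF] : forall i, exists B : 'I_N -> set S, (forall j, S0 (B j)) /\ F i = [set x | forall j, B j (x j)].
    by move=> i; case: (hF i) => B hB; exists B.
  have dpos i : 0 < e / 2 ^+ i.+2 by rewrite divr_gt0 // exprn_gt0.
  have /choice [OW hOW] : forall i, exists OW : ('I_N -> set S) * ('I_N -> set S),
     [/\ forall j, open (OW.1 j), forall j, S0 (OW.2 j),
      forall j, BF i j `<=` OW.1 j, forall j, OW.1 j `<=` OW.2 j &
      Q [set x | forall j, OW.2 j (x j)] <= Q [set x | forall j, BF i j (x j)] + e / 2 ^+ i.+2].
    move=> i; have [Op [W h]] := OA (hBF i).1 (dpos i); by exists (Op, W).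
  have cov : [set x : T | forall j, C j (x j)] `<=` \bigcup_i [set x | forall j, (OW i).1 j (x j)].
    move=> x hx.
    have : (\bigcup_i F i) x by rewrite eA => j; apply: CB; exact: hx.
    case=> i _ Fx; exists i => //= j.
    case: (hOW i) => _ _ h _ _; apply: h.
    by move: Fx; rewrite (hBF i).2; apply.
  have oO : forall i j, open ((OW i).1 j) by move=> i j; case: (hOW i).
  have [k hk] := prod_cover cC oO cov.
  exists k.
  have hW i : U [set x : T | forall j, (OW i).2 j (x j)].
    by apply: rectU; apply: rectP; case: (hOW i).
  have Dsub : [set x : T | forall j, D j (x j)] `<=` \big[setU/set0]_(i < k) [set x : T | forall j, (OW i).2 j (x j)].
    move=> x hx.
    have : [set x : T | forall j, C j (x j)] x by move=> j; apply: DC; exact: hx.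
    move/hk/in_bigU => [i hi]; apply/in_bigU; exists i => j.
    by case: (hOW i) => _ _ _ h _; apply: h; exact: hi.
  rewrite eA; apply: le_trans hQD _.
  have hDU : U [set x : T | forall j, D j (x j)] by apply: rectU; apply: rectP.
  apply: le_trans (lerD (fp_le aU fQ (alg_bigU aU (fun i => hW i)) hDU Dsub) (lexx _)) _.
  apply: le_trans (lerD (fp_bigU aU fQ (fun i => hW i)) (lexx _)) _.
  have hs : \sum_(i < k) Q [set x : T | forall j, (OW i).2 j (x j)] <= \sum_(i < k) Q (F i) + e / 2.
    apply: le_trans (_ : \sum_(i < k) (Q (F i) + e / 2 ^+ i.+2) <= _).
      apply: ler_sum => i _; case: (hOW i) => _ _ _ _ h; rewrite (hBF i).2; exact: h.
    rewrite big_split /= lerD2l geo lerBlDr lerDl.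
    by apply: divr_ge0; [exact: ltW|apply: exprn_ge0].
  apply: le_trans (lerD hs (lexx _)) _.
  by rewrite -addrA -splitr.
apply/cvgrPdist_le => e e0.
have [m hm] := key e e0.
near=> k.
have mk : (m <= k)%N by near: k; exists m.
rewrite ger0_norm; last by rewrite subr_ge0.
rewrite lerBlDr; apply: le_trans hm _.
by rewrite addrC lerD2l; exact: smono.
Unshelve. all: by end_near.
Qed.

Let exs : exists s : S, True.
Proof.
apply: contrapT => ns.
have e : [set: 'I_n -> S] = set0.
  by apply/seteqP; split => x // _; apply: ns; exists (x o0).
case: pP => p1 _ _; move: p1; rewrite e (prob0 (sPB n) pP) => /eqP.
by rewrite eq_sym oner_eq0.
Qed.
Let s0 : S := projT1 (cid exs).

Let FR : srf T := SRF (fun _ => s0) (@rect0 _ N S0 aS0 N0) (@rectI _ N S0 aS0) (@rectD _ N S0 aS0).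

Let Q0 : (fun A : set (srtype FR) => (Q A)%:E) set0 = 0%E.
Proof. by rewrite /= (fp_0 aU fQ). Qed.
Let Qge0 : forall A : set (srtype FR), (0 <= (fun A => (Q A)%:E) A)%E.
Proof. by move=> A; rewrite /= lee_fin; case/andP: (QB A). Qed.
Let Qsemi : semi_sigma_additive (fun A : set (srtype FR) => (Q A)%:E).
Proof.
move=> F hF tF hU.
have e : (fun m => \sum_(0 <= i < m) (Q (F i))%:E) = (fun m => (\sum_(i < m) Q (F i))%:E).
  by apply: funext => m; rewrite big_mkord sumEFin.
rewrite e; apply: cvg_EFin; first by apply: nearW.
exact: (Qsig hF tF hU).
Qed.

Let MQ : pmeas R FR := PM Q0 Qge0 Qsemi.
Let PN (A : set T) : R := fine (extm MQ A).

Let PNrect A : rect N S0 A -> PN A = Q A.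
Proof. by move=> hA; rewrite /PN extmE. Qed.

Let S0T : S0 setT. Proof. exact: (alg_T aS0). Qed.

Let PSE m : prod_sigma m (borel_sets S) = gen_sigma (rect m S0).
Proof. by rewrite -hgen prod_sigma_rect. Qed.

Let pPNf : is_probability (prod_sigma N (borel_sets S)) PN.
Proof.
rewrite PSE; apply: (@ext_prob R T FR MQ (@rectT _ N S0 aS0)).
by rewrite /= (fp_T fQ).
Qed.

Let rect_perm A (s : {perm 'I_N}) : rect N S0 A -> rect N S0 [set x | A (fun i => x (s i))].
Proof.
move=> [B [hB ->]]; exists (fun j => B (s^-1%g j)); split => //.
apply/seteqP; split => x /= h j.
  by have := h (s^-1%g j); rewrite permKV.
by rewrite -{1}(permK s j); exact: h.
Qed.

Let ePNf : exchangeable (borel_sets S) PN.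
Proof.
move=> s A hA.
have hA' : gen_sigma (rect N S0) A by rewrite -PSE.
apply: (@prob_unique R T (rect N S0) PN (fun A => PN [set x | A (fun i => x (s i))])) => //.
- exact: rectI.
- exact: rectT.
- by rewrite -PSE; exact: pPNf.
- rewrite -PSE; apply: (prob_preimage (h := fun x : T => (fun i => x (s i))) pPNf).
  by move=> B hB; exact: prod_sigma_comp.
- move=> B hB; rewrite PNrect // PNrect; last exact: rect_perm.
  by apply: Qexch; exact: rectU.
Qed.

Let rect_cyl A : rect n S0 A -> rect N S0 (cyl_ext hNn A).
Proof.
move=> [B [hB ->]].
exists (fun j : 'I_N => if insub (val j) is Some i then B i else setT); split.
  by move=> j; case: insubP => [i _ _|_] //.
apply/seteqP; split => x /= h.
- move=> j; case: insubP => [i _ ei|//].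
  have -> : j = widen_ord hNn i by apply: val_inj; rewrite /= ei.
  exact: h.
- move=> i; have := h (widen_ord hNn i).
  case: insubP => [i' _ ei'|]; last by rewrite /= ltn_ord.
  by have -> : i' = i by apply: val_inj; rewrite ei'.
Qed.

Let consist A : prod_sigma n (borel_sets S) A -> P A = PN (cyl_ext hNn A).
Proof.
move=> hA; rewrite PSE in hA.
apply: (@prob_unique R _ (rect n S0) P (fun A => PN (cyl_ext hNn A))) => //.
- exact: rectI.
- exact: rectT.
- by rewrite -PSE.
- rewrite -PSE; apply: (prob_preimage (h := fun y : T => (fun i => y (widen_ord hNn i))) pPNf).
  by move=> B hB; exact: prod_sigma_comp.
- move=> B hB; rewrite PNrect; last exact: rect_cyl.
  have [k hk] := rect_k hB.
  by rewrite (Qcyl hk).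
Qed.

Lemma main_result : extendible (ltnW hnN) (borel_sets S) P.
Proof.
split => //; split => //; exists PN; split; [exact: pPNf|exact: ePNf|exact: consist].
Qed.

End main.

Theorem theorem6 (R : realType) (S : topologicalType)
  (S0 : set (set S)) (n N : nat) (hn : (0 < n)%N) (hnN : (n < N)%N)
  (P : set ('I_n -> S) -> R)
  (G : nat -> set (set S)) (Pk : nat -> set ('I_n -> S) -> R) :
  hausdorff_space S ->
  locally_compact [set: S] ->
  set_algebra S0 ->
  gen_sigma S0 = borel_sets S ->
  is_probability (prod_sigma n (borel_sets S)) P ->
  exchangeable (borel_sets S) P ->
  (* (a) *)
  (forall eps : R, 0 < eps -> exists V, exists K,
     [/\ S0 V, compact K, V `<=` K &
         1 - eps <= P [set x | V (x (Ordinal hn))]]) ->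
  (* (b) *)
  (forall (eps : R) V, 0 < eps -> S0 V -> exists O, exists W,
     [/\ open O, S0 W, V `<=` O, O `<=` W &
         P [set x | (W `\` V) (x (Ordinal hn))] <= eps]) ->
  (forall k, sigma_algebra setT (G k)) ->
  (forall k, G k `<=` G k.+1) ->
  \bigcup_k G k = S0 ->
  (forall k, is_probability (prod_sigma n (G k)) (Pk k)) ->
  (fun k => sup [set `|Pk k A - P A| | A in prod_sigma n (G k)]) @ \oo --> (0 : R) ->
  (forall k, extendible (ltnW hnN) (G k) (Pk k)) ->
  extendible (ltnW hnN) (borel_sets S) P.
Proof.
intros; eapply main_result; eassumption.
Qed.
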